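(* Let $\eta=10^{-4}$. There are absolute constants $c,\epsilon_0>0$ such that for every $\epsilon\in(0,\epsilon_0)$ the following holds. Suppose a (possibly adaptive and randomized) procedure tosses a coin whose probability of heads is $p\in\{1/2-\eta,1/2+\eta\}$ at most $m$ times, and then outputs either a value in $\{1/2-\eta,1/2+\eta\}$ or the symbol `unknown'. If, for each of the two possible values of $p$, the procedure outputs `unknown' with probability at most $0.9$ and outputs the wrong value (the element of $\{1/2-\eta,1/2+\eta\}$ different from $p$) with probability at most $\epsilon$, then $m\ge c\log(1/\epsilon)$.
   Context: Coin tosses are independent; each toss comes up heads with probability $p$. *)

(* Defs.v *)
From Stdlib Require Import Reals List.
Open Scope R_scope.

Definition eta : R := / 10000.

(* Possible outputs: the value 1/2 - eta, the value 1/2 + eta, or 'unknown'. *)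
Inductive outcome : Type := OutLo | OutHi | Unknown.

(* A possibly adaptive and randomized coin-tossing procedure, described by its
   behaviour conditioned on the observed history of tosses (most recent toss
   first; [true] = heads):
   - [cont h] : probability that, having observed history [h], the procedure
     tosses the coin once more;
   - [out h o] : probability that it outputs [o] when it stops after history h. *)
Record procedure : Type := {
  cont : list bool -> R;
  out : list bool -> outcome -> R
}.

Definition valid_procedure (P : procedure) : Prop :=
  (forall h, 0 <= cont P h <= 1) /\
  (forall h o, 0 <= out P h o) /\
  (forall h, out P h OutLo + out P h OutHi + out P h Unknown = 1).

(* Probability that the procedure, started after history [h], with at most [k]
   further tosses allowed (it is forced to stop when k = 0), outputs [o] when the
   coin has heads-probability [p]. *)
Fixpoint out_prob (P : procedure) (p : R) (k : nat) (h : list bool) (o : outcome)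
  : R :=
  match k with
  | O => out P h o
  | S k' => (1 - cont P h) * out P h o
            + cont P h * (p * out_prob P p k' (true :: h) o
                          + (1 - p) * out_prob P p k' (false :: h) o)
  end.

Definition prob_output (P : procedure) (p : R) (m : nat) (o : outcome) : R :=
  out_prob P p m nil o.

(* Main.v *)
Require Import Defs.
From Stdlib Require Import Reals List Lra Psatz.
Open Scope R_scope.

Lemma sum1 P p k h : valid_procedure P ->
  out_prob P p k h OutLo + out_prob P p k h OutHi + out_prob P p k h Unknown = 1.
Proof.
  intros [Hc [Ho Hs]]. revert h. induction k as [|k IH]; intro h; simpl.
  - apply Hs.
  - transitivity ((1 - cont P h) * (out P h OutLo + out P h OutHi + out P h Unknown)
      + cont P h * (p * (out_prob P p k (true :: h) OutLo + out_prob P p k (true :: h) OutHi + out_prob P p k (true :: h) Unknown)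
      + (1 - p) * (out_prob P p k (false :: h) OutLo + out_prob P p k (false :: h) OutHi + out_prob P p k (false :: h) Unknown))).
    + ring.
    + rewrite Hs, !IH. ring.
Qed.

Lemma nonneg P p k h o : valid_procedure P -> 0 <= p <= 1 -> 0 <= out_prob P p k h o.
Proof.
  intros [Hc [Ho Hs]] Hp. revert h. induction k as [|k IH]; intro h; simpl.
  - apply Ho.
  - specialize (Hc h). specialize (Ho h o).
    pose proof (IH (true :: h)). pose proof (IH (false :: h)).
    apply Rplus_le_le_0_compat; apply Rmult_le_pos; try lra.
    apply Rplus_le_le_0_compat; apply Rmult_le_pos; lra.
Qed.

Definition qq : R := 4999 / 5001.

Lemma ratio P k h o : valid_procedure P ->
  out_prob P (1/2 - eta) k h o >= qq ^ k * out_prob P (1/2 + eta) k h o.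
Proof.
  intros HV. pose proof HV as [Hc [Ho Hs]]. revert h.
  assert (Hq : 0 < qq < 1) by (unfold qq; lra).
  induction k as [|k IH]; intro h; simpl.
  - lra.
  - assert (Hb : 0 <= 1/2 + eta <= 1) by (unfold eta; lra).
    pose proof (IH (true :: h)) as X. pose proof (IH (false :: h)) as Y.
    pose proof (nonneg P _ k (true :: h) o HV Hb) as X'.
    pose proof (nonneg P _ k (false :: h) o HV Hb) as Y'.
    pose proof (pow_le _ k (Rlt_le _ _ (proj1 Hq))) as Hqk.
    assert (Hqk1 : qq ^ k <= 1) by (rewrite <- (pow1 k); apply pow_incr; lra).
    specialize (Hc h). specialize (Ho h o).
    set (X0 := out_prob P (1/2 - eta) k (true :: h) o) in *.
    set (Y0 := out_prob P (1/2 - eta) k (false :: h) o) in *.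
    set (X1 := out_prob P (1/2 + eta) k (true :: h) o) in *.
    set (Y1 := out_prob P (1/2 + eta) k (false :: h) o) in *.
    set (Q := qq ^ k) in *. set (c := cont P h) in *. set (O := out P h o) in *.
    assert (A1 : (1 - c) * O >= qq * Q * ((1 - c) * O)).
    { assert (0 <= (1-c)*O) by (apply Rmult_le_pos; lra).
      assert (qq * Q <= 1) by nra. nra. }
    assert (A2 : (1/2 - eta) * X0 >= qq * Q * ((1/2 + eta) * X1)).
    { unfold qq, eta in *. nra. }
    assert (A3 : (1 - (1/2 - eta)) * Y0 >= qq * Q * ((1 - (1/2 + eta)) * Y1)).
    { unfold qq, eta in *. nra. }
    assert (A4 : c * ((1/2 - eta) * X0 + (1 - (1/2 - eta)) * Y0) >=
                 c * (qq * Q * ((1/2 + eta) * X1) + qq * Q * ((1 - (1/2 + eta)) * Y1))).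
    { apply Rle_ge, Rmult_le_compat_l; lra. }
    nra.
Qed.

Theorem theorem4p2 :
  exists c eps0 : R, 0 < c /\ 0 < eps0 /\
    forall eps : R, 0 < eps < eps0 ->
    forall (m : nat) (P : procedure), valid_procedure P ->
      (* p = 1/2 - eta *)
      prob_output P (1/2 - eta) m Unknown <= 9/10 ->
      prob_output P (1/2 - eta) m OutHi <= eps ->
      (* p = 1/2 + eta *)
      prob_output P (1/2 + eta) m Unknown <= 9/10 ->
      prob_output P (1/2 + eta) m OutLo <= eps ->
      INR m >= c * ln (1 / eps).
Proof.
  assert (Hlq : ln qq < 0) by (rewrite <- ln_1; apply ln_increasing; unfold qq; lra).
  exists (/ (2 * - ln qq)), (/400). split; [apply Rinv_0_lt_compat; lra|].
  split; [lra|].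
  intros eps Heps m P HV H1 H2 H3 H4.
  unfold prob_output in *.
  pose proof (sum1 P (1/2 + eta) m nil HV) as S.
  pose proof (ratio P m nil OutHi HV) as R.
  assert (Hq : 0 < qq) by (unfold qq; lra).
  pose proof (pow_lt _ m Hq) as Hqm.
  assert (Hqe : qq ^ m <= 20 * eps) by nra.
  assert (L : ln (qq ^ m) <= ln (20 * eps)).
  { destruct (Rle_lt_or_eq_dec _ _ Hqe) as [Hl|He].
    - left; apply ln_increasing; lra.
    - rewrite He; lra. }
  rewrite ln_pow in L by lra. rewrite ln_mult in L by lra.
  assert (Le : ln eps < ln (/400)) by (apply ln_increasing; lra).
  rewrite ln_Rinv in Le by lra.
  assert (E400 : ln 400 = 2 * ln 20).
  { replace 400 with (20 * 20) by lra. rewrite ln_mult by lra. ring. }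
  assert (H20 : 0 < ln 20) by (rewrite <- ln_1; apply ln_increasing; lra).
  unfold Rdiv. rewrite Rmult_1_l, ln_Rinv by lra.
  assert (Hm : INR m * (- ln qq) >= - ln eps / 2) by lra.
  apply Rle_ge.
  replace (/ (2 * - ln qq) * - ln eps) with ((- ln eps / 2) / (- ln qq)) by (field; lra).
  unfold Rdiv. apply (Rmult_le_reg_r (- ln qq)); [lra|].
  rewrite Rmult_assoc, Rinv_l by lra. lra.
Qed.
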